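(* The following two statements are equivalent: (a) (Petersen coloring conjecture) For every bridgeless cubic graph $G$ we have $P \prec G$, where $P$ is the Petersen graph. (b) There exists a sublinear function $f:\mathbb{N}\to\mathbb{N}$ such that every bridgeless cubic graph $G$ (not necessarily connected) admits a proper $5$-edge-coloring $c$ with $|N_G(c)|\le f(|V(G)|)$.
   Context: Graphs are finite, undirected, loopless, and may contain parallel edges. For a vertex $v$ of a graph $G$, $\partial_G(v)$ denotes the set of edges incident to $v$. For cubic graphs $G,H$, an $H$-coloring of $G$ is a map $\phi:E(G)\to E(H)$ such that for every $v\in V(G)$ there is $w\in V(H)$ with $\phi(\partial_G(v))=\partial_H(w)$; we write $H\prec G$ if $G$ has an $H$-coloring. A proper $k$-edge-coloring of $G$ is a map $c:E(G)\to\{1,\dots,k\}$ with adjacent edges receiving different colors. For such $c$ and a vertex $v$, $S_c(v)$ is the set of colors on edges incident to $v$. An edge $uv$ of a cubic graph is poor if $|S_c(u)\cup S_c(v)|=3$, rich if $|S_c(u)\cup S_c(v)|=5$, and abnormal if it is neither poor nor rich. $N_G(c)$ denotes the set of abnormal edges of $G$ with respect to $c$. A function $f:\mathbb{N}\to\mathbb{N}$ is sublinear if $\lim_{n\to\infty} f(n)/n=0$. It may be used that (Jaeger) a cubic graph $G$ satisfies $P\prec G$ iff $G$ admits a proper $5$-edge-coloring with no abnormal edges, and that it suffices to prove the Petersen coloring conjecture for 2-connected cubic graphs. *)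

(* Defs.v *)
From mathcomp Require Import all_boot all_order all_algebra.
Set Implicit Arguments. Unset Strict Implicit. Unset Printing Implicit Defensive.
Import Order.TTheory GRing.Theory Num.Theory.

(* A finite, undirected, loopless multigraph: vertex and edge finTypes, each
   edge has two (distinct) endpoints; parallel edges are allowed. *)
Record multigraph := Multigraph {
  V : finType;
  E : finType;
  src : E -> V;
  tgt : E -> V;
  loopless : forall e, src e != tgt e }.

Section Graphs.
Variable G : multigraph.

Definition incident (v : V G) (e : E G) : bool := (src e == v) || (tgt e == v).

Definition bd (v : V G) : {set E G} := [set e | incident v e].

Definition cubic : Prop := forall v : V G, #|bd v| = 3.

Definition adj_minus (e : E G) : rel (V G) := fun x y =>
  [exists e' : E G, (e' != e) &&
     (((src e' == x) && (tgt e' == y)) || ((src e' == y) && (tgt e' == x)))].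

Definition is_bridge (e : E G) : bool := ~~ connect (adj_minus e) (src e) (tgt e).

Definition bridgeless : Prop := forall e : E G, ~~ is_bridge e.

Definition proper_coloring (k : nat) (c : E G -> 'I_k) : Prop :=
  forall (v : V G) (e1 e2 : E G),
    incident v e1 -> incident v e2 -> e1 != e2 -> c e1 != c e2.

Definition Sc (k : nat) (c : E G -> 'I_k) (v : V G) : {set 'I_k} := c @: bd v.

Definition edge_colors_union (k : nat) (c : E G -> 'I_k) (e : E G) : nat :=
  #|Sc c (src e) :|: Sc c (tgt e)|.

Definition poor (k : nat) (c : E G -> 'I_k) (e : E G) : bool :=
  edge_colors_union c e == 3.
Definition rich (k : nat) (c : E G -> 'I_k) (e : E G) : bool :=
  edge_colors_union c e == 5.
Definition abnormal (k : nat) (c : E G -> 'I_k) (e : E G) : bool :=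
  ~~ poor c e && ~~ rich c e.

Definition abnormal_edges (k : nat) (c : E G -> 'I_k) : {set E G} :=
  [set e | abnormal c e].

End Graphs.

Definition H_coloring (H G : multigraph) (phi : E G -> E H) : Prop :=
  forall v : V G, exists w : V H, phi @: bd v = bd w.

Definition prec (H G : multigraph) : Prop := exists phi, @H_coloring H G phi.

(* The Petersen graph: outer 5-cycle 0..4, spokes i -- i+5, inner pentagram
   5-7-9-6-8-5. *)
Definition pet_src_list : seq nat := [:: 0;1;2;3;4; 0;1;2;3;4; 5;7;9;6;8].
Definition pet_tgt_list : seq nat := [:: 1;2;3;4;0; 5;6;7;8;9; 7;9;6;8;5].
Definition pet_src (e : 'I_15) : 'I_10 := inord (nth 0 pet_src_list e).
Definition pet_tgt (e : 'I_15) : 'I_10 := inord (nth 0 pet_tgt_list e).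

Lemma pet_loopless_b : [forall e, pet_src e != pet_tgt e].
Proof. by apply/forallP; case; do 15! (case; first by move=> ?; apply/eqP; move/(congr1 val); rewrite /= !inordK). Qed.

Lemma pet_loopless : forall e, pet_src e != pet_tgt e.
Proof. exact/forallP/pet_loopless_b. Qed.

Definition Petersen : multigraph := @Multigraph 'I_10 'I_15 pet_src pet_tgt pet_loopless.

(* f : N -> N is sublinear: lim f(n)/n = 0 (epsilon-N form, rational eps) *)
Definition sublinear (f : nat -> nat) : Prop :=
  forall eps : rat, (0 < eps)%R ->
    exists N : nat, forall n : nat, (N < n)%N -> ((f n)%:R < eps * n%:R)%R.

(* Main.v *)
Require Import Defs.
From mathcomp Require Import all_boot all_order all_algebra.
Set Implicit Arguments. Unset Strict Implicit. Unset Printing Implicit Defensive.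

Fixpoint ordl n : seq 'I_n :=
  match n with 0 => [::] | n'.+1 => ord0 :: map (lift ord0) (ordl n') end.

Lemma val_ordl n : map val (ordl n) = iota 0 n.
Proof.
elim: n => [//|n IH] /=; congr (_ :: _).
rewrite -map_comp (@eq_map _ _ _ (addn 1 \o val)); last by [].
by rewrite map_comp IH -iotaDl.
Qed.

Lemma mem_ordl n (i : 'I_n) : i \in ordl n.
Proof. by rewrite -(mem_map val_inj) val_ordl mem_iota /= ltn_ord. Qed.

Lemma uniq_ordl n : uniq (ordl n).
Proof. by rewrite -(map_inj_uniq val_inj) val_ordl iota_uniq. Qed.

Lemma card_count n (A : {pred 'I_n}) : #|A| = count (mem A) (ordl n).
Proof.
rewrite -size_filter -(card_uniqP (filter_uniq _ (uniq_ordl n))).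
by apply: eq_card => i; rewrite mem_filter mem_ordl andbT.
Qed.

Lemma allP_ordl n (P : pred 'I_n) : all P (ordl n) -> forall i, P i.
Proof. by move/allP=> H i; apply: H; apply: mem_ordl. Qed.

Lemma hasP_ordl n (P : pred 'I_n) : has P (ordl n) -> exists i, P i.
Proof. by case/hasP=> i _ Hi; exists i. Qed.

Definition cP_list : seq nat := [:: 0;1;2;3;4;2;3;4;0;1;3;0;2;4;1].
Definition pc (n : nat) := nth 0 cP_list n.
Definition cP (e : E Petersen) : 'I_5 := inord (pc e).
Definition incN (x f : nat) := (nth 0 pet_src_list f == x) || (nth 0 pet_tgt_list f == x).
Definition colN (x i : nat) := has (fun f => incN x f && (pc f == i)) (iota 0 15).

Lemma pc_lt n : pc n < 5.
Proof. rewrite /pc; do 15! (case: n => [//|n]); by case: n. Qed.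
Lemma src_lt n : nth 0 pet_src_list n < 10.
Proof. do 15! (case: n => [//|n]); by case: n. Qed.
Lemma tgt_lt n : nth 0 pet_tgt_list n < 10.
Proof. do 15! (case: n => [//|n]); by case: n. Qed.

Lemma val_cP f : val (cP f) = pc f.
Proof. rewrite /= /cP; apply: inordK; exact: pc_lt. Qed.

Lemma incP (x : V Petersen) (f : E Petersen) : incident x f = incN x f.
Proof.
rewrite /incident /incN -!val_eqE.
change (pet_src f) with (inord (nth 0 pet_src_list f) : 'I_10).
change (pet_tgt f) with (inord (nth 0 pet_tgt_list f) : 'I_10).
rewrite /= !inordK ?src_lt ?tgt_lt //.
Qed.

Lemma colP (x : V Petersen) (i : 'I_5) : (i \in Sc cP x) = colN x i.
Proof.
apply/imsetP/hasP => [[f]|[n]].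
  rewrite inE incP => Hf ->; exists (val f); first by rewrite mem_iota /= ltn_ord.
  by rewrite Hf val_cP eqxx.
rewrite mem_iota /= => Hn /andP[Hx /eqP Hc].
exists (Ordinal Hn : E Petersen); first by rewrite inE incP.
by apply: val_inj; rewrite val_cP.
Qed.

Lemma factA : all (fun x : 'I_10 => count (fun f : 'I_15 => incN x f) (ordl 15) == 3) (ordl 10).
Proof. vm_compute. reflexivity. Qed.

Lemma factB : all (fun x : 'I_10 => all (fun e1 : 'I_15 => all (fun e2 : 'I_15 =>
   [&& incN x e1, incN x e2 & val e1 != val e2] ==> (pc e1 != pc e2)) (ordl 15)) (ordl 15)) (ordl 10).
Proof. vm_compute. reflexivity. Qed.

Lemma factC : all (fun a : 'I_5 => all (fun b : 'I_5 => all (fun c : 'I_5 =>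
  [&& a != b, a != c & b != c] ==> has (fun x : 'I_10 => all (fun i : 'I_5 => colN x i == [|| i == a, i == b | i == c]) (ordl 5)) (ordl 10))
   (ordl 5)) (ordl 5)) (ordl 5).
Proof. vm_compute. reflexivity. Qed.

Lemma factD : all (fun x : 'I_10 => all (fun y : 'I_10 => all (fun i : 'I_5 =>
  [&& count (fun j : 'I_5 => colN x j && colN y j) (ordl 5) == 1, colN x i & colN y i] ==>
   has (fun f : 'I_15 => [&& incN x f, incN y f & pc f == i]) (ordl 15)) (ordl 5)) (ordl 10)) (ordl 10).
Proof. vm_compute. reflexivity. Qed.

Lemma factE : all (fun x : 'I_10 => all (fun y : 'I_10 => all (fun f : 'I_15 =>
  incN x f && incN y f ==> (count (fun i : 'I_5 => colN x i || colN y i) (ordl 5) == 3) || (count (fun i : 'I_5 => colN x i || colN y i) (ordl 5) == 5))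
   (ordl 15)) (ordl 10)) (ordl 10).
Proof. vm_compute. reflexivity. Qed.

Lemma P_cubic : cubic Petersen.
Proof.
move=> x; rewrite card_count (eq_count (a2 := fun f : 'I_15 => incN x f)).
  exact/eqP/(allP_ordl factA x).
by move=> f; rewrite /= inE incP.
Qed.

Lemma P_proper : proper_coloring cP.
Proof.
move=> x e1 e2; rewrite !incP => H1 H2 H12.
have := allP_ordl (allP_ordl (allP_ordl factB x) e1) e2.
by rewrite H1 H2 /= val_eqE H12 /= -!val_cP val_eqE.
Qed.

Lemma P_E (x y : V Petersen) (f : E Petersen) : incident x f -> incident y f ->
  (#|Sc cP x :|: Sc cP y| == 3) || (#|Sc cP x :|: Sc cP y| == 5).
Proof.
rewrite !incP => Hx Hy.
have := allP_ordl (allP_ordl (allP_ordl factE x) y) f; rewrite Hx Hy andbT implyTb.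
rewrite card_count (eq_count (a2 := fun i : 'I_5 => colN x i || colN y i)) //.
by move=> i; rewrite /= inE !colP.
Qed.

Lemma P_C (a b c : 'I_5) : [&& a != b, a != c & b != c] ->
  exists x : V Petersen, forall i, (i \in Sc cP x) = [|| i == a, i == b | i == c].
Proof.
move=> H; have := allP_ordl (allP_ordl (allP_ordl factC a) b) c; rewrite H implyTb.
move=> Hh; have [x Hx] := hasP_ordl Hh; exists x => i; rewrite colP; exact/eqP/(allP_ordl Hx).
Qed.

Lemma P_D (x y : V Petersen) (i : 'I_5) : #|Sc cP x :&: Sc cP y| = 1 ->
  i \in Sc cP x -> i \in Sc cP y ->
  exists f, [&& incident x f, incident y f & cP f == i].
Proof.
move=> H1 Hx Hy; have := allP_ordl (allP_ordl (allP_ordl factD x) y) i.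
rewrite -!colP Hx Hy andbT.
rewrite -(eq_count (a1 := mem (Sc cP x :&: Sc cP y))); last first.
  by move=> j; rewrite /= inE !colP.
rewrite -card_count H1 eqxx implyTb => Hh; have [f /and3P[Hfx Hfy Hfc]] := hasP_ordl Hh.
exists f; rewrite !incP Hfx Hfy /=; rewrite -val_eqE val_cP; exact: Hfc.
Qed.

Lemma proper_inj (G : multigraph) k (c : E G -> 'I_k) v :
  proper_coloring c -> {in bd v &, injective c}.
Proof.
move=> Hc e1 e2; rewrite !inE => H1 H2 Heq; apply/eqP; apply: contraT => Hne.
by move: (Hc v e1 e2 H1 H2 Hne); rewrite Heq eqxx.
Qed.

Lemma card_Sc (G : multigraph) k (c : E G -> 'I_k) v :
  cubic G -> proper_coloring c -> #|Sc c v| = 3.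
Proof. by move=> HG Hc; rewrite /Sc card_in_imset ?HG //; exact: proper_inj. Qed.

Lemma inc_src (G : multigraph) (e : E G) : e \in bd (src e).
Proof. by rewrite inE /incident eqxx. Qed.
Lemma inc_tgt (G : multigraph) (e : E G) : e \in bd (tgt e).
Proof. by rewrite inE /incident eqxx orbT. Qed.

Lemma forward (G : multigraph) (phi : E G -> E Petersen) :
  cubic G -> H_coloring phi ->
  proper_coloring (fun e => cP (phi e)) /\ abnormal_edges (fun e => cP (phi e)) = set0.
Proof.
move=> HG Hphi.
have Sc_eq : forall v w, phi @: bd v = bd w -> Sc (fun e => cP (phi e)) v = Sc cP w.
  by move=> v w Hw; rewrite /Sc -Hw -imset_comp.
split.
  move=> v e1 e2 H1 H2 Hne; have [w Hw] := Hphi v.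
  have Hinj : {in bd v &, injective phi}.
    by apply/imset_injP; rewrite Hw !P_cubic HG.
  have Hne' : phi e1 != phi e2.
    by apply: contra Hne => /eqP/Hinj; rewrite !inE => ->.
  have Hin : forall e, incident v e -> incident w (phi e).
    move=> e He; have : phi e \in bd w by rewrite -Hw imset_f // inE.
    by rewrite inE.
  exact: (P_proper (Hin _ H1) (Hin _ H2) Hne').
apply/setP => e; rewrite !inE /abnormal /poor /rich /edge_colors_union.
have [wu Hu] := Hphi (src e); have [wv Hv] := Hphi (tgt e).
rewrite (Sc_eq _ _ Hu) (Sc_eq _ _ Hv).
have Iu : incident wu (phi e).
  have : phi e \in bd wu by rewrite -Hu imset_f // inc_src.
  by rewrite inE.
have Iv : incident wv (phi e).
  have : phi e \in bd wv by rewrite -Hv imset_f // inc_tgt.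
  by rewrite inE.
by case/orP: (P_E Iu Iv) => ->; rewrite ?andbF.
Qed.

Lemma card3 (T : finType) (A : {set T}) : #|A| = 3 ->
  exists a b c, [&& a != b, a != c & b != c] /\ forall i, (i \in A) = [|| i == a, i == b | i == c].
Proof.
rewrite cardE => Hs; have Hu := enum_uniq (mem A); have Hm := mem_enum (mem A).
move: Hs Hu Hm; case: (enum A) => [|a [|b [|c [|? ?]]]] //= _.
rewrite !inE !negb_or => /andP[/andP[Hab Hac] /andP[Hbc _]] Hm.
exists a, b, c; split; first by rewrite Hab Hac Hbc.
by move=> i; rewrite -Hm !inE.
Qed.

Definition wS (T : {set 'I_5}) : V Petersen := odflt ord0 [pick x | Sc cP x == T].

Lemma wS_spec (T : {set 'I_5}) : #|T| = 3 -> Sc cP (wS T) = T.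
Proof.
move=> HT; rewrite /wS; case: pickP => [x /eqP //|H].
have [a [b [c [Hd Hm]]]] := card3 HT.
have [x Hx] := P_C Hd; move: (H x) => /negP[]; apply/eqP/setP => i.
by rewrite Hx Hm.
Qed.

Lemma P_unique (x : V Petersen) f1 f2 : incident x f1 -> incident x f2 -> cP f1 = cP f2 -> f1 = f2.
Proof.
move=> H1 H2 Hc; apply/eqP; apply: contraT => Hne.
by move: (P_proper H1 H2 Hne); rewrite Hc eqxx.
Qed.

Lemma backward (G : multigraph) (c : E G -> 'I_5) :
  cubic G -> proper_coloring c -> abnormal_edges c = set0 -> prec Petersen G.
Proof.
move=> HG Hc Hab.
pose w v := wS (Sc c v).
have Hw : forall v, Sc cP (w v) = Sc c v by move=> v; apply: wS_spec; apply: card_Sc.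
pose phi e := odflt ord0 [pick f | incident (w (src e)) f && (cP f == c e)].
have Hsrc : forall e, incident (w (src e)) (phi e) && (cP (phi e) == c e).
  move=> e; rewrite /phi; case: pickP => [f //|H].
  have : c e \in Sc cP (w (src e)) by rewrite Hw imset_f // inc_src.
  by case/imsetP=> f; rewrite inE => Hf Hce; move: (H f); rewrite Hf Hce eqxx.
have Htgt : forall e, incident (w (tgt e)) (phi e).
  move=> e; have /andP[Hs /eqP Hce] := Hsrc e.
  have : e \notin abnormal_edges c by rewrite Hab inE.
  rewrite inE /abnormal /poor /rich /edge_colors_union negb_and !negbK.
  have HA := card_Sc (src e) HG Hc; have HB := card_Sc (tgt e) HG Hc.
  case/orP=> /eqP Hun.
    have E1 : Sc c (src e) = Sc c (src e) :|: Sc c (tgt e).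
      by apply/eqP; rewrite eqEcard subsetUl Hun HA.
    have E2 : Sc c (tgt e) = Sc c (src e) :|: Sc c (tgt e).
      by apply/eqP; rewrite eqEcard subsetUr Hun HB.
    have Eq := etrans E1 (esym E2).
    by rewrite /w -Eq.
  have HI : #|Sc cP (w (src e)) :&: Sc cP (w (tgt e))| = 1.
    by rewrite !Hw; have := cardsUI (Sc c (src e)) (Sc c (tgt e)); rewrite Hun HA HB => /eqP; rewrite eqn_add2l => /eqP.
  have Hi1 : c e \in Sc cP (w (src e)) by rewrite Hw imset_f // inc_src.
  have Hi2 : c e \in Sc cP (w (tgt e)) by rewrite Hw imset_f // inc_tgt.
  have [f /and3P[F1 F2 /eqP F3]] := P_D HI Hi1 Hi2.
  by rewrite (P_unique Hs F1 (etrans Hce (esym F3))).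
exists phi => v; exists (w v).
have Hsub : phi @: bd v \subset bd (w v).
  apply/subsetP => _ /imsetP[e He ->]; rewrite inE.
  move: He; rewrite inE /incident => /orP[] /eqP <-.
    by case/andP: (Hsrc e).
  exact: Htgt.
apply/eqP; rewrite eqEcard Hsub P_cubic card_in_imset ?HG //.
move=> e1 e2 H1 H2 Heq; apply: (proper_inj Hc H1 H2).
by have /andP[_ /eqP <-] := Hsrc e1; have /andP[_ /eqP <-] := Hsrc e2; rewrite Heq.
Qed.
Import Order.TTheory GRing.Theory Num.Theory.

Section Copies.
Variables (k : nat) (G : multigraph).

Definition csrc (p : 'I_k * E G) : 'I_k * V G := (p.1, src p.2).
Definition ctgt (p : 'I_k * E G) : 'I_k * V G := (p.1, tgt p.2).
Lemma cloop p : csrc p != ctgt p.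
Proof. by rewrite /csrc /ctgt xpair_eqE eqxx loopless. Qed.

Definition copies : multigraph := @Multigraph ('I_k * V G)%type ('I_k * E G)%type csrc ctgt cloop.

Lemma inc_copies (i : 'I_k) v j e :
  incident (G := copies) (i, v) (j, e) = (j == i) && incident v e.
Proof.
rewrite /incident /= /csrc /ctgt /= !xpair_eqE.
by case: (j == i).
Qed.

Lemma bd_copies (i : 'I_k) v : bd (G := copies) (i, v) = (fun e => (i, e)) @: bd v.
Proof.
apply/setP => -[j e]; rewrite inE inc_copies.
apply/andP/imsetP => [[/eqP -> He]|[e' He' [-> ->]]].
  by exists e; rewrite ?inE.
by rewrite eqxx; rewrite inE in He'.
Qed.

Lemma copies_cubic : cubic G -> cubic copies.
Proof.
move=> HG [i v]; rewrite bd_copies card_imset ?HG //.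
by move=> e1 e2 [].
Qed.

Lemma lift_path (i : 'I_k) (e : E G) x p :
  path (adj_minus e) x p ->
  path (adj_minus (G := copies) (i, e)) (i, x) (map (fun y => (i, y)) p).
Proof.
elim: p x => [//|z p IH] x /= /andP[Hxz Hp]; rewrite IH // andbT.
case/existsP: Hxz => e' /andP[He' H]; apply/existsP; exists (i, e').
by rewrite /csrc /ctgt /= !xpair_eqE eqxx /= He'.
Qed.

Lemma copies_bridgeless : bridgeless G -> bridgeless copies.
Proof.
move=> HG [i e]; rewrite /is_bridge negbK /= /csrc /ctgt /=.
have := HG e; rewrite /is_bridge negbK => /connectP[p Hp ->].
apply/connectP; exists (map (fun y => (i, y)) p); first exact: lift_path.
by rewrite last_map.
Qed.

Lemma card_copies : #|V copies| = k * #|V G|.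
Proof. by rewrite /= card_prod card_ord. Qed.

Variable c : E copies -> 'I_5.
Definition cres (i : 'I_k) (e : E G) := c (i, e).

Lemma Sc_copies i v : Sc c (i, v) = Sc (cres i) v.
Proof. by rewrite /Sc bd_copies -imset_comp. Qed.

Lemma abn_copies i e : abnormal c (i, e) = abnormal (cres i) e.
Proof. by rewrite /abnormal /poor /rich /edge_colors_union /= /csrc /ctgt /= !Sc_copies. Qed.

Lemma proper_copies i : proper_coloring c -> proper_coloring (cres i).
Proof.
move=> Hc v e1 e2 H1 H2 Hne; apply: (Hc (i, v)); rewrite ?inc_copies ?eqxx //.
by rewrite xpair_eqE negb_and Hne orbT.
Qed.

End Copies.

Theorem mainTheorem1 :
  (forall G : multigraph, cubic G -> bridgeless G -> prec Petersen G)
  <->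
  (exists f : nat -> nat, sublinear f /\
     forall G : multigraph, cubic G -> bridgeless G ->
       exists c : E G -> 'I_5,
         proper_coloring c /\ #|abnormal_edges c| <= f #|V G|).
Proof.
split.
  move=> HA; exists (fun _ => 0); split.
    move=> eps Heps; exists 0 => n Hn.
    by rewrite (mulr_gt0 Heps) // ltr0n.
  move=> G HG HB; have [phi Hphi] := HA G HG HB.
  have [Hp Hn] := forward HG Hphi.
  by exists (fun e => cP (phi e)); rewrite Hn cards0.
case=> f [Hf HB] G HG HBr.
case: (posnP #|V G|) => Hn.
  exists (fun _ => ord0) => v; exfalso.
  by move: (card0_eq Hn v); rewrite !inE.
have Hpos : (0 < 1 / (#|V G|)%:R :> rat)%R by rewrite divr_gt0 // ltr0n.
have [N HN] := Hf _ Hpos.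
set k := N.+1.
have Hk : N < k * #|V G|.
  by have := leq_mul (leqnn N.+1) Hn; rewrite muln1.
have [c [Hc Hcard]] := HB (copies k G) (copies_cubic HG) (copies_bridgeless HBr).
rewrite card_copies in Hcard.
have Hlt : f (k * #|V G|) < k.
  have := HN _ Hk.
  have -> : (1 / (#|V G|)%:R * (k * #|V G|)%:R = k%:R :> rat)%R.
    rewrite natrM div1r mulrC -mulrA mulfV ?mulr1 //.
    by rewrite pnatr_eq0 -lt0n.
  by rewrite ltr_nat.
case: (pickP (fun i => abnormal_edges (cres c i) == set0)) => [i /eqP Hi|Hnone].
  exact: (backward HG (proper_copies i Hc) Hi).
exfalso.
have Hsub : [set: 'I_k] \subset (fun p => p.1) @: abnormal_edges c.
  apply/subsetP => i _; have := Hnone i; move/negbT/set0Pn => [e He].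
  by apply/imsetP; exists (i, e); rewrite // inE abn_copies -(in_set (abnormal (cres c i))).
have := leq_trans (subset_leq_card Hsub) (leq_imset_card _ _).
rewrite cardsT card_ord => Hle.
by move: (leq_ltn_trans (leq_trans Hle Hcard) Hlt); rewrite ltnn.
Qed.
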